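(* Let $\mathcal{H}$ be a handle structure for a compact surface $S$ and let $C$ be a standard 1-manifold properly embedded in $S$. Then the number of pairings in its associated pairing system (equivalently, the total number of parallelism classes of arcs of $C$ in the 0-handles and 1-handles, each handle viewed as a polygon) is at most $9|\mathcal{H}^1|+2\,\mathrm{simp}(C)\le 9\|\mathcal{H}\|+2\,\mathrm{simp}(C)$.
   Context: A handle structure $\mathcal{H}$ decomposes $S$ into 0-, 1- and 2-handles; $\mathcal{H}^i$ is the union of the $i$-handles, $|\mathcal{H}^1|$ is the number of 1-handles and $\|\mathcal{H}\|$ the total number of handles. Each handle is viewed as a polygon whose sides are the components of its intersections with other handles and with $\partial S$. A properly embedded 1-manifold $C$ is standard if it meets each 0-handle in properly embedded arcs, each 1-handle in properly embedded arcs respecting the product structure and parallel to the core, and is disjoint from the 2-handles. Arcs of $C$ in a polygon are parallel if they cobound a square in the polygon meeting the boundary in two arcs, avoiding vertices, and meeting $C$ only in arcs parallel to them; a pairing system has one pairing per parallelism class. A simplifying disc for $C$ is a disc $D$ in a 0-handle $H_0$ with $\partial D=\alpha\cup\beta$, $\alpha=D\cap C$, $\beta=D\cap\partial H_0$, where $\beta$ meets $\mathcal{H}^1$ in at most one arc and $\partial S$ in at most one arc; it is boundary-simplifying if it meets $\partial S$, interior-simplifying otherwise. $\mathrm{simp}(C)$ is the number of boundary-simplifying discs plus twice the number of interior-simplifying discs. *)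

(* Defs.v *)
From mathcomp Require Import all_boot.

Unset Strict Implicit.
Unset Printing Implicit Defensive.

(* The kind of a side of a handle (viewed as a polygon):
   KAtt h e : the side is the attaching arc of end e of the 1-handle h,
   KBdry    : the side lies in boundary S,
   KTwo     : the side is an arc of intersection with a 2-handle. *)
Inductive kind (n1 : nat) : Type := KAtt of 'I_n1 & bool | KBdry | KTwo.
Arguments KAtt {n1}.
Arguments KBdry {n1}.
Arguments KTwo {n1}.

Definition is_att {n1} (k : kind n1) : bool := if k is KAtt _ _ then true else false.
Definition is_bdry {n1} (k : kind n1) : bool := if k is KBdry then true else false.
Definition is_two {n1} (k : kind n1) : bool := if k is KTwo then true else false.
Definition is_att_of {n1} (h : 'I_n1) (e : bool) (k : kind n1) : bool :=
  if k is KAtt h' e' then (h' == h) && (e' == e) else false.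

(* A polygon carrying arcs of C.
   ks : cyclic list of sides (kinds); cs : number of points of C on each side.
   Points of C on the boundary are numbered 0 .. npts cs - 1 in cyclic order,
   side 0 first; consecutive sides are separated by a vertex (a polygon with a
   single side has no vertex: its side is the whole boundary circle).
   m : the matching, m p = other endpoint of the arc of C starting at p. *)

Definition npts (cs : seq nat) : nat := sumn cs.

Definition side_of (cs : seq nat) (p : nat) : nat :=
  find (fun s => p < sumn (take s.+1 cs)) (iota 0 (size cs)).

Definition fwd (N x y : nat) : seq nat :=
  [seq q <- iota 0 N | if x < y then (x < q) && (q < y) else (x < q) || (q < y)].

(* the closed boundary arc from point x forward to point y contains no vertex *)
Definition vtx_free (cs : seq nat) (x y : nat) : bool :=
  (size cs <= 1) || ((x < y) && (side_of cs x == side_of cs y)).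

(* the arcs through points a and b are parallel: they cobound a square whose
   intersection with the boundary is two arcs (from u to v, and from v' to u')
   avoiding vertices, and which meets C only in arcs running across it *)
Definition parallel (cs : seq nat) (m : nat -> nat) (a b : nat) : bool :=
  let N := npts cs in
  has (fun u => has (fun v =>
     let u' := m u in let v' := m v in
     [&& v \in fwd N u u', v' \in fwd N v u', vtx_free cs u v, vtx_free cs v' u',
         all (fun p => m p \in fwd N v' u') (fwd N u v) &
         all (fun p => m p \in fwd N u v) (fwd N v' u')]) [:: b; m b]) [:: a; m a].

(* number of parallelism classes of arcs (each arc represented by its smaller
   endpoint); a class is a connected component of the parallelism relation *)
Definition par_classes (cs : seq nat) (m : nat -> nat) : nat :=
  let N := npts cs in
  let A := fun p : 'I_N => val p < m (val p) in
  let r := fun p q : 'I_N => [&& A p, A q & parallel cs m (val p) (val q)] in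
  #|[set [set q | A q && connect r p q] | p in [pred p | A p]]|.

(* sides visited (with multiplicity, one per component) by the boundary arc
   from point u forward to point u' *)
Definition visits (cs : seq nat) (u u' : nat) : seq nat :=
  let k := size cs in let s := side_of cs u in let s' := side_of cs u' in
  if (k <= 1) || ((u < u') && (s == s')) then [:: s] else
  let d := if s == s' then k else (s' + k - s) %% k in
  [seq (s + i) %% k | i <- iota 0 d.+1].

(* the disc D cut off by the arc from u to m u on the forward side
   (beta = boundary arc from u forward to m u): 0 if it is not simplifying,
   1 if boundary-simplifying, 2 if interior-simplifying *)
Definition simp_weight {n1} (ks : seq (kind n1)) (cs : seq nat) (m : nat -> nat)
    (u : nat) : nat :=
  let vs := [seq nth KTwo ks i | i <- visits cs u (m u)] in
  let na := count is_att vs in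
  let nb := count is_bdry vs in
  if [&& fwd (npts cs) u (m u) == [::], na <= 1 & nb <= 1]
  then (if nb == 1 then 1 else 2) else 0.

Definition simp_poly {n1} (ks : seq (kind n1)) (cs : seq nat) (m : nat -> nat) : nat :=
  \sum_(u < npts cs) simp_weight ks cs m u.

(* well-formed arcs in a polygon: disjoint from 2-handle sides, m a fixed point
   free involution of the points, arcs pairwise disjoint (non-crossing) *)
Definition wf_poly {n1} (ks : seq (kind n1)) (cs : seq nat) (m : nat -> nat) : bool :=
  let N := npts cs in
  [&& size cs == size ks,
      all (fun i => is_two (nth KTwo ks i) ==> (nth 0 cs i == 0)) (iota 0 (size ks)),
      all (fun p => [&& m p < N, m p != p & m (m p) == p]) (iota 0 N) &
      all (fun a => all (fun b => (b \in fwd N a (m a)) ==> (m b \in fwd N a (m a)))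
                        (iota 0 N)) (iota 0 N)].

(* Handle structures.  h0 lists the 0-handles, each as the cyclic list of its
   sides; h1free h gives, for the 1-handle h, whether each of its two free
   sides lies in boundary S (true) or in a 2-handle (false). *)
Record handle_structure := HS {
  nH1 : nat;
  nH2 : nat;
  h0 : seq (seq (kind nH1));
  h1free : 'I_nH1 -> bool * bool }.

Definition nH0 (H : handle_structure) : nat := size (h0 H).
Definition hnorm (H : handle_structure) : nat := nH0 H + nH1 H + nH2 H.

(* boundary of a 0-handle: attaching arcs of 1-handles alternate with free
   arcs (in boundary S or in a 2-handle), or the whole circle is one free side *)
Definition alternating {n1} (ks : seq (kind n1)) : bool :=
  ((size ks == 1) && ~~ is_att (nth KTwo ks 0)) ||
  [&& 0 < size ks, ~~ odd (size ks) &
      all (fun i => is_att (nth KTwo ks i) == ~~ odd i) (iota 0 (size ks))].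

Definition wf_handle (H : handle_structure) : bool :=
  all alternating (h0 H) &&
  [forall h : 'I_(nH1 H), forall e : bool,
     sumn [seq count (is_att_of h e) ks | ks <- h0 H] == 1].

(* A 1-manifold in standard position: for the 0-handle j, cnt j gives the
   number of points of C on each side and cm j the matching of these points by
   the arcs of C in that 0-handle. *)
Record mfd := Mfd { cnt : nat -> seq nat; cm : nat -> nat -> nat }.

(* number of points of C on the attaching arc of end e of the 1-handle h *)
Definition strands (H : handle_structure) (C : mfd) (h : 'I_(nH1 H)) (e : bool) : nat :=
  sumn [seq \sum_(i < size (nth [::] (h0 H) j))
            (if is_att_of h e (nth KTwo (nth [::] (h0 H) j) i)
             then nth 0 (cnt C j) i else 0) | j <- iota 0 (nH0 H)].

Definition standard (H : handle_structure) (C : mfd) : bool :=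
  all (fun j => wf_poly (nth [::] (h0 H) j) (cnt C j) (cm C j)) (iota 0 (nH0 H)) &&
  [forall h : 'I_(nH1 H), strands H C h false == strands H C h true].

(* the 1-handle h as a polygon: end false, free side, end true, free side;
   its arcs run parallel to the core *)
Definition h1_kinds (H : handle_structure) (h : 'I_(nH1 H)) : seq (kind (nH1 H)) :=
  let fr := fun b : bool => (if b then KBdry else KTwo : kind (nH1 H)) in
  [:: KAtt h false; fr (h1free H h).1; KAtt h true; fr (h1free H h).2].
Definition h1_cnt (H : handle_structure) (C : mfd) (h : 'I_(nH1 H)) : seq nat :=
  let n := strands H C h false in [:: n; 0; n; 0].
Definition h1_match (H : handle_structure) (C : mfd) (h : 'I_(nH1 H)) : nat -> nat :=
  fun p => (2 * strands H C h false).-1 - p.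

Definition pairings (H : handle_structure) (C : mfd) : nat :=
  \sum_(j < nH0 H) par_classes (cnt C j) (cm C j) +
  \sum_(h < nH1 H) par_classes (h1_cnt H C h) (h1_match H C h).

Definition simp (H : handle_structure) (C : mfd) : nat :=
  \sum_(j < nH0 H) simp_poly (nth [::] (h0 H) j) (cnt C j) (cm C j).

(* Main.v *)
Require Import Defs.
From mathcomp Require Import all_boot zify.

Lemma mem_fwd N x y q : (q \in fwd N x y) =
  (q < N) && (if x < y then (x < q) && (q < y) else (x < q) || (q < y)).
Proof. by rewrite /fwd mem_filter mem_iota add0n /= andbC. Qed.

Lemma fwd_adj N x y : y = x.+1 -> fwd N x y = [::].
Proof.
move=> ->; rewrite /fwd -(filter_pred0 (iota 0 N)); apply: eq_filter => q.
rewrite ltnSn /=; lia.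
Qed.

Definition cont cs (m : nat -> nat) p :=
  [&& p.+1 < npts cs, p.+1 < (m p).-1, m p.+1 == (m p).-1,
      vtx_free cs p p.+1 & vtx_free cs (m p).-1 (m p)].

Lemma par_cont cs m p : p < m p -> m (m p.+1) = p.+1 -> m (m p) = p -> m p < npts cs -> cont cs m p ->
  parallel cs m p p.+1 && parallel cs m p.+1 p.
Proof.
move=> lt mm mmp mlt /and5P[h1 h2 /eqP h3 v1 v2].
have e1 : fwd (npts cs) p p.+1 = [::] by apply: fwd_adj.
have e2 : fwd (npts cs) (m p).-1 (m p) = [::] by apply: fwd_adj; lia.
apply/andP; split.
- apply/hasP; exists p; first by rewrite inE eqxx.
  apply/hasP; exists p.+1; first by rewrite inE eqxx.
  simpl. rewrite h3 v1 v2 e1 e2 !mem_fwd /=.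
  have -> : p < m p by [].
  have -> : p.+1 < m p by lia.
  rewrite !andbT; apply/andP; split; lia.
- apply/hasP; exists (m p).-1; first by rewrite h3 !inE eqxx orbT.
  apply/hasP; exists (m p); first by rewrite !inE eqxx orbT.
  have hm : m (m p).-1 = p.+1 by rewrite -h3.
  simpl. rewrite hm mmp v1 v2 e1 e2 !mem_fwd /=.
  rewrite !andbT.
  have -> : (m p).-1 < p.+1 = false by lia.
  have -> : m p < p.+1 = false by lia.
  apply/andP; split; lia.
Qed.

Lemma card_count N (P : pred nat) :
  #|[set p : 'I_N | P (val p)]| = count P (iota 0 N).
Proof.
rewrite cardsE cardE /enum_mem size_filter -val_enum_ord count_map.
by rewrite enumT.
Qed.

Lemma classes_le cs m :
  (forall p, p < npts cs -> m p < npts cs) ->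
  (forall p, p < npts cs -> m (m p) = p) ->
  par_classes cs m <= count (fun p => (p < m p) && ~~ cont cs m p) (iota 0 (npts cs)).
Proof.
move=> mlt mm.
rewrite /par_classes -card_count.
set N := npts cs.
set A := fun p : 'I_N => val p < m (val p).
set r := fun p q : 'I_N => [&& A p, A q & parallel cs m (val p) (val q)].
set cls := fun p : 'I_N => [set q | A q && connect r p q].
have key : forall k (p : 'I_N), N - p <= k -> A p ->
    exists2 q : 'I_N, (A q && ~~ cont cs m q) & cls p = cls q.
  elim=> [|k IH] p hk Ap.
    have := ltn_ord p; lia.
  case hc: (cont cs m p); last by exists p; rewrite ?Ap ?hc.
  have hp1 : p.+1 < N by case/and5P: hc.
  pose p' := Ordinal hp1.
  have Ap' : A p'.
    rewrite /A /=; case/and5P: hc => _ h2 /eqP -> _ _; exact: h2.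
  have [par1 par2] : parallel cs m p p.+1 /\ parallel cs m p.+1 p.
    apply/andP; apply: par_cont => //; first by apply: mm.
    - by apply: mm; apply: ltn_ord.
    - by apply: mlt; apply: ltn_ord.
  have [q Hq e] := IH p' ltac:(rewrite /=; lia) Ap'.
  exists q => //; rewrite -e.
  apply/setP => x; rewrite !inE; congr (A x && _).
  have r1 : r p p' by rewrite /r Ap Ap' par1.
  have r2 : r p' p by rewrite /r Ap Ap' par2.
  apply/idP/idP => hx.
  - exact: connect_trans (connect1 r2) hx.
  - exact: connect_trans (connect1 r1) hx.
apply: leq_trans (leq_imset_card cls _).
apply: subset_leq_card; apply/subsetP => x /imsetP [p Ap ->].
have [q Hq ->] := key _ p (leqnn _) Ap.
by apply/imsetP; exists q; rewrite ?inE.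
Qed.

Lemma count_inj (P Q : pred nat) (f : nat -> nat) n k :
  {in [pred x | (x < n) && P x] &, injective f} ->
  (forall x, x < n -> P x -> (f x < k) && Q (f x)) ->
  count P (iota 0 n) <= count Q (iota 0 k).
Proof.
move=> inj hf; rewrite -!size_filter -(size_map f); apply: uniq_leq_size.
- rewrite map_inj_in_uniq ?filter_uniq ?iota_uniq //.
  move=> x y; rewrite !mem_filter !mem_iota /= => /andP[Px xn] /andP[Py yn].
  by apply: inj; rewrite inE /= ?Px ?Py; [move: xn|move: yn]; rewrite add0n => ->.
- move=> y /mapP [x]; rewrite mem_filter mem_iota => /andP[Px xn] ->.
  rewrite add0n in xn; case/andP: (hf x xn Px) => h1 h2.
  by rewrite mem_filter mem_iota h2 add0n h1.
Qed.

Lemma iota0S n : iota 0 n.+1 = iota 0 n ++ [:: n].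
Proof. by rewrite -addn1 iotaD. Qed.

Lemma count_last (P : pred nat) n :
  count (fun j => (j.+1 < n) && P j) (iota 0 n) = count P (iota 0 n.-1).
Proof.
case: n => [//|n]; rewrite iota0S count_cat /= ltnn !addn0 /=.
by apply: eq_in_count => x; rewrite mem_iota add0n /= ltnS => ->.
Qed.

Lemma tele (l : nat -> bool) k :
  count (fun j => ~~ l j && l j.+1) (iota 0 k) + l 0 =
  count (fun j => l j && ~~ l j.+1) (iota 0 k) + l k.
Proof.
elim: k => [//|k IH].
rewrite iota0S !count_cat /= !addn0.
move: IH; case: (l k); case: (l k.+1) => /=; lia.
Qed.

Lemma mono_count (f : nat -> nat) k : (forall i, f i <= f i.+1) ->
  count (fun j => f j != f j.+1) (iota 0 k) <= f k - f 0.
Proof.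
move=> hf; elim: k => [|k IH]; first by rewrite /=; lia.
rewrite iota0S !count_cat /= !addn0.
have := hf k; have : f 0 <= f k.
  elim: (k) => [//|j IHj]; exact: leq_trans IHj (hf j).
case: eqP => /= e; lia.
Qed.

Lemma find_mono {T} (a b : pred T) s : (forall x, b x -> a x) -> find a s <= find b s.
Proof. move=> h; exact: sub_find. Qed.

Lemma sub_in_count (T : eqType) (a1 a2 : pred T) s :
  {in s, forall x, a1 x -> a2 x} -> count a1 s <= count a2 s.
Proof.
elim: s => [//|x s IH] h /=; apply: leq_add.
  by case ax: (a1 x) => //; rewrite h // inE eqxx.
by apply: IH => y ys; apply: h; rewrite inE ys orbT.
Qed.

Definition good cs (m : nat -> nat) :=
  [/\ (forall p, p < (npts cs) -> m p < (npts cs)), (forall p, p < (npts cs) -> m p != p),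
      (forall p, p < (npts cs) -> m (m p) = p) &
      (forall a b, a < (npts cs) -> a < m a -> a < b -> b < m a -> a < m b < m a)].

Definition LRs cs m j := (m j == j.+1) && vtx_free cs j j.+1.
Definition Tr cs j := (j.+1 < npts cs) && ~~ vtx_free cs j j.+1.

Lemma inner cs m p : good cs m -> p < npts cs -> p < m p -> m p != p.+1 ->
  p.+1 < m p.+1 < m p.
Proof.
case=> mlt mneq mm nc hp hlt hne.
have h1 : p.+1 < m p by lia.
have := nc p p.+1 hp hlt (ltnSn p) h1.
have := mneq p.+1 ltac:(have := mlt p hp; lia).
lia.
Qed.

Lemma step1 cs m : good cs m ->
  count (fun p => [&& p < m p, ~~ cont cs m p & (m p == p.+1) || (m p.+1 == (m p).-1)])
        (iota 0 (npts cs))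
  <= count (LRs cs m) (iota 0 (npts cs)) + count (Tr cs) (iota 0 (npts cs)).
Proof.
move=> G; have [mlt mneq mm nc] := G.

rewrite -count_predUI; apply: leq_trans (leq_addr _ _).
pose c z := (m z != z.+1) && vtx_free cs z z.+1.
pose f z := if c z then (m z).-1 else z.
have L : forall z, z < (npts cs) -> [&& z < m z, ~~ cont cs m z & (m z == z.+1) || (m z.+1 == (m z).-1)] ->
    if c z then (m (f z) < f z) && ((m z).-1 < (npts cs)) && Tr cs (m z).-1 else (f z < m (f z)) && (LRs cs m z || Tr cs z).
  move=> z hz /and3P [lt hc hor].
  rewrite /f /c /LRs; case e: (m z == z.+1) => /=.
    rewrite lt /Tr /=; move/eqP: e => e; rewrite -e (mlt z hz) /=.
    by case: (vtx_free _ _ _).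
  have h3 : m z.+1 = (m z).-1.
    by case/orP: hor => [/eqP h|/eqP //]; move: e; rewrite h eqxx.
  have [i1 i2] : z.+1 < m z.+1 /\ m z.+1 < m z.
    by apply/andP; apply: (@inner cs m z G) => //; rewrite e.
  have hc' : ~~ (vtx_free cs z z.+1 && vtx_free cs (m z).-1 (m z)).
    move: hc; rewrite /cont h3 eqxx /=.
    have -> : z.+1 < (npts cs) by have := mlt z hz; lia.
    by have -> : z.+1 < (m z).-1 by lia.
  case v1: (vtx_free cs z z.+1) => /=.
    rewrite v1 /= in hc'.
    have e1 : m (m z).-1 = z.+1 by rewrite -h3 mm //; have := mlt z hz; lia.
    rewrite e1 /Tr prednK; last by lia.
    rewrite (mlt z hz) hc' /=.
    by rewrite andbT; have := mlt z hz; lia.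
  by rewrite lt /Tr v1 /=; have := mlt z hz; lia.
apply: (@count_inj _ _ f).
- move=> x y; rewrite !inE => /andP[hx Px] /andP[hy Py] e.
  have Lx := L x hx Px; have Ly := L y hy Py.
  move: Lx Ly e; rewrite /f; case: (c x); case: (c y) => //=.
  + move=> /andP[/andP [_ _] _] /andP [/andP [_ _] _] e.
    have px : 0 < m x by move: Px => /and3P[]; lia.
    have py : 0 < m y by move: Py => /and3P[]; lia.
    have e' : m x = m y by lia.
    by rewrite -(mm x hx) -(mm y hy) e'.
  + by move=> /andP[/andP [h _] _] /andP[h' _] e; move: h h'; rewrite e; lia.
  + by move=> /andP[h' _] /andP[/andP [h _] _] e; move: h h'; rewrite e; lia.
- move=> x hx Px; have := L x hx Px; rewrite /f; case: (c x) => /=.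
  + by case/andP => /andP [_ ->] ->; rewrite orbT.
  + by case/andP => _ ->; rewrite hx.
Qed.

Definition RLp cs (m : nat -> nat) j := (j.+1 < npts cs) && (~~ (j < m j) && (j.+1 < m j.+1)).
Definition LRp cs (m : nat -> nat) j := (j.+1 < npts cs) && ((j < m j) && ~~ (j.+1 < m j.+1)).

Lemma step2 cs m : good cs m ->
  count (fun p => [&& p < m p, ~~ cont cs m p, m p != p.+1 & m p.+1 != (m p).-1])
        (iota 0 (npts cs)) <= count (RLp cs m) (iota 0 (npts cs)).
Proof.
move=> G; have [mlt mneq mm nc] := G.
apply: (@count_inj _ _ (fun p => m p.+1)).
- move=> x y; rewrite !inE => /andP[hx /and4P[lx _ nx _]] /andP[hy /and4P[ly _ ny _]] e.
  have [i1 i2] := andP (@inner cs m x G hx lx nx).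
  have [j1 j2] := andP (@inner cs m y G hy ly ny).
  have := mm x.+1; have := mm y.+1; rewrite e.
  have := mlt x hx; have := mlt y hy; lia.
- move=> x hx /and4P[lx _ nx ne].
  have [i1 i2] := andP (@inner cs m x G hx lx nx).
  have hmx := mlt x hx.
  have hx1 : x.+1 < npts cs by lia.
  set j := m x.+1 in i1 i2 ne *.
  have hj1 : j.+1 < m x by move/eqP: ne; lia.
  have mj : m j = x.+1 by rewrite /j mm.
  rewrite /RLp mj.
  have -> : j < npts cs by lia.
  have -> : j.+1 < npts cs by lia.
  have -> : (j < x.+1) = false by lia.
  rewrite /=.
  have hj1N : j.+1 < npts cs by lia.
  have := nc x j.+1 hx lx ltac:(lia) hj1.
  have := mneq j.+1 hj1N.
  have mq := mm j.+1 hj1N.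
  case: (ltnP j.+1 (m j.+1)) => // hq.
  move=> hneq hrange.
  have hqj : m j.+1 != j by apply/eqP => h; move: mq; rewrite h mj; lia.
  have hqx : m j.+1 != x.+1 by apply/eqP => h; move: mq; rewrite h -/j; lia.
  have := nc x.+1 (m j.+1) hx1 i1 ltac:(lia) ltac:(rewrite -/j; lia).
  rewrite mq -/j; lia.
Qed.

Lemma step3 cs m : good cs m ->
  count (RLp cs m) (iota 0 (npts cs)) <= count (LRp cs m) (iota 0 (npts cs)).
Proof.
move=> G; have [mlt mneq mm nc] := G.
rewrite /RLp /LRp !count_last.
have := tele (fun j => j < m j) (npts cs).-1.
case E: (npts cs) => [|n] /=; first by [].
have := mlt n; have := mneq n; rewrite E ltnSn => /(_ isT) /eqP h1 /(_ isT) h2.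
have -> : (n < m n) = false by lia.
lia.
Qed.

Lemma step4 cs m : good cs m ->
  count (LRp cs m) (iota 0 (npts cs)) <=
  count (LRs cs m) (iota 0 (npts cs)) + count (Tr cs) (iota 0 (npts cs)).
Proof.
move=> G; have [mlt mneq mm nc] := G.
rewrite -count_predUI; apply: leq_trans (leq_addr _ _).
apply: sub_in_count => j; rewrite mem_iota add0n /= => hj.
case/andP => hj1 /andP [lj nj].
have mj : m j = j.+1.
  have := mneq j.+1 hj1.
  case: (ltnP j.+1 (m j)) => h; last by lia.
  have := nc j j.+1 hj lj (ltnSn j) h; lia.
rewrite /LRs /Tr mj eqxx hj1 /=; by case: (vtx_free _ _ _).
Qed.

Lemma noncont_bound cs m : good cs m ->
  count (fun p => (p < m p) && ~~ cont cs m p) (iota 0 (npts cs)) <=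
  2 * count (LRs cs m) (iota 0 (npts cs)) + 2 * count (Tr cs) (iota 0 (npts cs)).
Proof.
move=> G.
have h1 := @step1 cs m G; have h2 := @step2 cs m G; have h3 := @step3 cs m G; have h4 := @step4 cs m G.
set P1 := (fun p => [&& p < m p, ~~ cont cs m p & (m p == p.+1) || (m p.+1 == (m p).-1)]) in h1.
set P2 := (fun p => [&& p < m p, ~~ cont cs m p, m p != p.+1 & m p.+1 != (m p).-1]) in h2.
have : count (fun p => (p < m p) && ~~ cont cs m p) (iota 0 (npts cs)) <=
       count P1 (iota 0 (npts cs)) + count P2 (iota 0 (npts cs)).
  rewrite -count_predUI; apply: leq_trans (leq_addr _ _).
  apply: sub_count => p /andP [a b]; rewrite /= /P1 /P2 a b /=.
  by case: (m p == p.+1); case: (m p.+1 == (m p).-1).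
lia.
Qed.

Lemma good_wf {n1} (ks : seq (kind n1)) cs m : wf_poly ks cs m -> good cs m.
Proof.
case/and4P => _ _ /allP h3 /allP h4.
split.
- by move=> p hp; case/and3P: (h3 p ltac:(by rewrite mem_iota)).
- by move=> p hp; case/and3P: (h3 p ltac:(by rewrite mem_iota)).
- by move=> p hp; case/and3P: (h3 p ltac:(by rewrite mem_iota)) => _ _ /eqP.
- move=> a b ha la lb lb2.
  have hb : b < npts cs.
    by case/and3P: (h3 a ltac:(by rewrite mem_iota)) => hm _ _; lia.
  have := allP (h4 a ltac:(by rewrite mem_iota)) b ltac:(by rewrite mem_iota).
  rewrite !mem_fwd la hb lb lb2 /=.
  by case/andP => _.
Qed.

Lemma simp_pos {n1} (ks : seq (kind n1)) cs m u : LRs cs m u -> 0 < simp_weight ks cs m u.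
Proof.
case/andP => /eqP e v.
rewrite /simp_weight /visits e.
move: v; rewrite /vtx_free => v.
rewrite v fwd_adj //=.
by case: (is_att _); case: (is_bdry _).
Qed.

Lemma LRs_simp {n1} (ks : seq (kind n1)) cs m :
  count (LRs cs m) (iota 0 (npts cs)) <= simp_poly ks cs m.
Proof.
rewrite -sum1_count /simp_poly.
have -> : iota 0 (npts cs) = index_iota 0 (npts cs) by rewrite /index_iota subn0.
rewrite big_mkord big_mkcond /=; apply: leq_sum => i _.
by case: ifP => // h; apply: simp_pos.
Qed.

Lemma even_count n : 2 * count (fun i => ~~ odd i) (iota 0 n) = n + odd n.
Proof.
elim: n => [//|n IH]; rewrite iota0S count_cat /= addn0 mulnDr IH.
by case: (odd n) => /=; lia.
Qed.

Lemma alt_size {n1} (ks : seq (kind n1)) : alternating ks -> 1 < size ks ->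
  size ks <= 2 * count is_att ks.
Proof.
case/orP => [/andP[/eqP -> _] //| /and3P [_ _ /allP hall]] _.
rewrite -[in count _ ks](mkseq_nth KTwo ks) /mkseq count_map.
rewrite (@eq_in_count _ _ (fun i => ~~ odd i)); last first.
  by move=> i hi; apply/eqP; apply: hall.
rewrite even_count; lia.
Qed.

Lemma side_mono cs i : side_of cs i <= side_of cs i.+1.
Proof. by apply: sub_find => s /= h; apply: ltn_trans h. Qed.

Lemma Tr_bound {n1} (ks : seq (kind n1)) cs : size cs = size ks -> alternating ks ->
  count (Tr cs) (iota 0 (npts cs)) <= 2 * count is_att ks.
Proof.
move=> es alt.
case: (leqP (size cs) 1) => hs.
  rewrite (@eq_count _ _ pred0) ?count_pred0 // => j.
  by rewrite /Tr /vtx_free hs /= andbF.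
apply: (@leq_trans (size ks)); last by apply: alt_size; rewrite -?es.
rewrite -es /Tr count_last.
apply: leq_trans (_ : count (fun j => side_of cs j != side_of cs j.+1) (iota 0 (npts cs).-1) <= _).
  apply: sub_count => j; rewrite /vtx_free.
  have -> : (size cs <= 1) = false by lia.
  by rewrite ltnSn.
apply: leq_trans (mono_count _ _ (side_mono cs)) _.
have h := find_size (fun s => (npts cs).-1 < sumn (take s.+1 cs)) (iota 0 (size cs)).
rewrite size_iota in h; exact: leq_trans (leq_subr _ _) h.
Qed.

Lemma poly_bound {n1} (ks : seq (kind n1)) cs m : wf_poly ks cs m -> alternating ks ->
  par_classes cs m <= 2 * simp_poly ks cs m + 4 * count is_att ks.
Proof.
move=> wf alt.
have G := @good_wf _ ks cs m wf; have [mlt _ mm _] := G.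
apply: leq_trans (@classes_le cs m mlt mm) _.
apply: leq_trans (@noncont_bound cs m G) _.
have := LRs_simp ks cs m.
have := @Tr_bound _ ks cs ltac:(by case/and4P: wf => /eqP) alt.
lia.
Qed.

Lemma side4 n q : side_of [:: n; 0; n; 0] q =
  if q < n then 0 else if q < n + n then 2 else if q < n + n then 3 else 4.
Proof.
rewrite /side_of /=.
rewrite !addn0 !add0n.
case: (ltnP q n) => //= h1.
case: (ltnP q (n + n)) => //= h2.
Qed.

Lemma h1_gen n : par_classes [:: n; 0; n; 0] (fun p => (2 * n).-1 - p) <= 1.
Proof.
have hN : npts [:: n; 0; n; 0] = 2 * n by rewrite /npts /=; lia.
apply: leq_trans (@classes_le _ _ _ _) _.
- by rewrite hN => p hp; lia.
- by rewrite hN => p hp; lia.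
rewrite hN.
apply: leq_trans (_ : count (pred1 n.-1) (iota 0 (2 * n)) <= _); last first.
  by rewrite count_uniq_mem ?iota_uniq // leq_b1.
apply: sub_in_count => p; rewrite mem_iota add0n /= => hp /andP [lt nc].
rewrite /=; case: (eqVneq p n.-1) => // hne; exfalso; move/negP: nc; apply.
rewrite /cont hN /vtx_free !side4 /=.
have -> : p < n by lia.
have -> : p.+1 < n by lia.
have -> : ((2 * n).-1 - p).-1 < n = false by lia.
have -> : (2 * n).-1 - p < n = false by lia.
have -> : ((2 * n).-1 - p).-1 < n + n by lia.
have -> : (2 * n).-1 - p < n + n by lia.
rewrite /= !andbT; apply/and3P; split; try (apply/eqP); lia.
Qed.

Lemma count_big {T} (a : pred T) s : count a s = \sum_(x <- s) (a x : nat).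
Proof. by rewrite -sum1_count big_mkcond; apply: eq_bigr => x _; case: (a x). Qed.

Lemma sumn_big {T} (F : T -> nat) s : sumn [seq F x | x <- s] = \sum_(x <- s) F x.
Proof. by elim: s => [|x s IH]; rewrite ?big_nil ?big_cons //= IH. Qed.

Lemma att_le {n1} (x : kind n1) :
  (is_att x : nat) <= \sum_(h < n1) \sum_(e : bool) (is_att_of h e x : nat).
Proof.
case: x => [h0 e0| |] //=.
rewrite (bigD1 h0) //= (bigD1 e0) //= /is_att_of !eqxx /=.
by rewrite -addnA leq_addr.
Qed.

Lemma att_total (H : handle_structure) : wf_handle H ->
  \sum_(j < nH0 H) count is_att (nth [::] (h0 H) j) <= 2 * nH1 H.
Proof.
case/andP => _ /forallP hf.
have -> : \sum_(j < nH0 H) count is_att (nth [::] (h0 H) j) =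
          \sum_(ks <- h0 H) count is_att ks by rewrite (big_nth [::]) big_mkord.
apply: leq_trans (_ : \sum_(ks <- h0 H) \sum_(h < nH1 H) \sum_(e : bool)
                        count (is_att_of h e) ks <= _).
  apply: leq_sum => ks _; rewrite count_big.
  apply: leq_trans (_ : \sum_(x <- ks) \sum_(h < nH1 H) \sum_(e : bool) (is_att_of h e x : nat) <= _).
    by apply: leq_sum => x _; apply: att_le.
  rewrite exchange_big; apply: leq_sum => h _.
  rewrite exchange_big; apply: leq_sum => e _.
  by rewrite count_big.
rewrite exchange_big.
apply: leq_trans (_ : \sum_(h < nH1 H) 2 <= _); last by rewrite sum_nat_const card_ord mulnC.
apply: leq_sum => h _; rewrite exchange_big.
rewrite big_bool /=.
have e1 := eqP (forallP (hf h) true); have e2 := eqP (forallP (hf h) false).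
by rewrite -!sumn_big e1 e2.
Qed.

Theorem lemma2p17 (H : handle_structure) (C : mfd) :
  wf_handle H -> standard H C ->
  pairings H C <= 9 * nH1 H + 2 * simp H C /\
  9 * nH1 H + 2 * simp H C <= 9 * hnorm H + 2 * simp H C.
Proof.
move=> wfh st; split; last by rewrite /hnorm; lia.
have hatt := @att_total H wfh.
have p0 : \sum_(j < nH0 H) par_classes (cnt C j) (cm C j) <=
          2 * simp H C + 4 * \sum_(j < nH0 H) count is_att (nth [::] (h0 H) j).
  rewrite /simp !big_distrr -big_split /=; apply: leq_sum => j _.
  apply: poly_bound.
  - by case/andP: st => /allP /(_ j) -> //; rewrite mem_iota add0n ltn_ord.
  - move: wfh; rewrite /wf_handle => /andP [ha _]; move: (all_nthP [::] ha) => ha'.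
    by apply: ha'; apply: ltn_ord.
have p1 : \sum_(h < nH1 H) par_classes (h1_cnt H C h) (h1_match H C h) <= nH1 H.
  apply: leq_trans (_ : \sum_(h < nH1 H) 1 <= _); last by rewrite sum_nat_const card_ord muln1.
  by apply: leq_sum => h _; apply: h1_gen.
rewrite /pairings; lia.
Qed.
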